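(* Let $\boldsymbol{u}^\star\in\mathbb{R}^n\setminus\{\boldsymbol{0}\}$ and $f(\boldsymbol{u})=\frac12\|\boldsymbol{u}\boldsymbol{u}^{\mathrm T}-\boldsymbol{u}^\star{\boldsymbol{u}^\star}^{\mathrm T}\|_1$ on $\mathbb{R}^n$. Then for any spurious stationary point $\boldsymbol{u}$ of $f$, and for $\boldsymbol{w}=\boldsymbol{u}^\star-\boldsymbol{u}$ as well as for $\boldsymbol{w}=-\boldsymbol{u}^\star-\boldsymbol{u}$, $$d^2f(\boldsymbol{u};\boldsymbol{0})(\boldsymbol{w})=-\|\boldsymbol{u}^\star\|_1^2<0.$$
   Context: $\|\cdot\|_1$ is the entrywise $\ell_1$-norm. For $g:\mathbb{R}^n\to\mathbb{R}$ and $\boldsymbol{x},\boldsymbol{v},\boldsymbol{w}\in\mathbb{R}^n$, the second subderivative is $d^2g(\boldsymbol{x};\boldsymbol{v})(\boldsymbol{w})=\liminf_{t\searrow0,\ \boldsymbol{w}'\to\boldsymbol{w}}\frac{g(\boldsymbol{x}+t\boldsymbol{w}')-g(\boldsymbol{x})-t\,\boldsymbol{v}^{\mathrm T}\boldsymbol{w}'}{t^2/2}$. A point $\boldsymbol{u}$ is stationary if $\boldsymbol{0}\in\partial f(\boldsymbol{u})$, where $\partial f(\boldsymbol{u})=\{\boldsymbol{Z}\boldsymbol{u}:\boldsymbol{Z}\text{ symmetric}, \boldsymbol{Z}\in\operatorname{Sign}(\boldsymbol{u}\boldsymbol{u}^{\mathrm T}-\boldsymbol{u}^\star{\boldsymbol{u}^\star}^{\mathrm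 T})\}$ (entrywise set-valued sign, $\operatorname{Sign}(0)=[-1,1]$) is the (Fréchet = limiting = Clarke) subdifferential; it is spurious if additionally $\boldsymbol{u}\notin\{\boldsymbol{u}^\star,-\boldsymbol{u}^\star\}$. *)

(* Defs.v *)
From HB Require Import structures.
From mathcomp Require Import all_boot all_order all_algebra.
From mathcomp Require Import all_classical all_reals.
From mathcomp Require Import ereal.
Set Implicit Arguments. Unset Strict Implicit. Unset Printing Implicit Defensive.
Import Order.TTheory GRing.Theory Num.Theory.
Local Open Scope ring_scope.
Local Open Scope classical_set_scope.

Definition l1norm (R : realType) (m k : nat) (A : 'M[R]_(m, k)) : R :=
  \sum_(i < m) \sum_(j < k) `|A i j|.

Definition fobj (R : realType) (n : nat) (us u : 'cV[R]_n) : R :=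
  2^-1 * l1norm (u *m u^T - us *m us^T).

Definition Sign (R : realType) (r : R) : set R :=
  [set z | (0 < r -> z = 1) /\ (r < 0 -> z = -1) /\ (r = 0 -> -1 <= z <= 1)].

Definition subdiff (R : realType) (n : nat) (us u : 'cV[R]_n) : set 'cV[R]_n :=
  [set Z *m u | Z in [set Z : 'M[R]_n | Z^T = Z /\
     forall i j, Sign ((u *m u^T - us *m us^T) i j) (Z i j)]].

Definition stationary (R : realType) (n : nat) (us u : 'cV[R]_n) : Prop :=
  subdiff us u 0.

Definition spurious_stationary (R : realType) (n : nat) (us u : 'cV[R]_n) : Prop :=
  stationary us u /\ u <> us /\ u <> - us.

(* second subderivative
   d^2 g(x;v)(w) = liminf_{t \searrow 0, w' -> w} (g(x+t w') - g x - t v^T w')/(t^2/2),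
   the liminf written out as sup over delta>0 of inf over the punctured
   neighbourhood 0 < t < delta, |w'_i - w_i| < delta (sup-norm ball). *)
Definition second_subderiv (R : realType) (n : nat) (g : 'cV[R]_n -> R)
    (x v w : 'cV[R]_n) : \bar R :=
  ereal_sup [set ereal_inf
      [set ((g (x + tw.1 *: tw.2) - g x - tw.1 * (v^T *m tw.2) 0 0)
             / (tw.1 ^+ 2 / 2))%:E
        | tw in [set tw : R * 'cV[R]_n | 0 < tw.1 < d /\
                   forall i, `|tw.2 i 0 - w i 0| < d]]
    | d in [set d : R | 0 < d]].

(* Main.v *)
Require Import Defs.
From HB Require Import structures.
From mathcomp Require Import all_boot all_order all_algebra.
From mathcomp Require Import all_classical all_reals.
From mathcomp Require Import ereal.
From mathcomp Require Import ring lra.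
Import Order.TTheory GRing.Theory Num.Theory.
Local Open Scope ring_scope.

Section Aux.
Context {R : realType}.
Implicit Types r z : R.

Lemma Sign_pos [r z] : Sign r z -> 0 < r -> z = 1.
Proof. by case. Qed.
Lemma Sign_neg [r z] : Sign r z -> r < 0 -> z = -1.
Proof. by case=> _ []. Qed.
Lemma Sign_bd [r z] : Sign r z -> -1 <= z <= 1.
Proof.
case=> h1 [h2 h3]; have [r0|r0|r0] := ltgtP r 0.
- by rewrite h2 //; apply/andP; split; lra.
- by rewrite h1 //; apply/andP; split; lra.
- exact: h3.
Qed.
Lemma Sign_mul [r z] : Sign r z -> z * r = `|r|.
Proof.
case=> h1 [h2 h3]; have [r0|r0|r0] := ltgtP r 0.
- by rewrite h2 // ltr0_norm // mulN1r.
- by rewrite h1 // gtr0_norm // mul1r.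
- by rewrite r0 mulr0 normr0.
Qed.
Lemma Sign_one [r] : Sign r 1 -> 0 <= r.
Proof.
move=> h; rewrite leNgt; apply/negP => r0.
by have := Sign_neg h r0; lra.
Qed.
Lemma Sign_m1 [r] : Sign r (-1) -> r <= 0.
Proof.
move=> h; rewrite leNgt; apply/negP => r0.
by have := Sign_pos h r0; lra.
Qed.

Lemma mono_term (a b y pp za zb : R) : b < a -> 0 < pp ->
  Sign (a * y - 1) za -> Sign (b * y - 1) zb -> zb * (y * pp) <= za * (y * pp).
Proof.
move=> ab pp0 ha hb.
have [ba1 bb1] := (Sign_bd ha, Sign_bd hb).
move: ba1 bb1 => /andP[za1 za2] /andP[zb1 zb2].
have [y0|y0|y0] := ltgtP y 0.
- have ayb : a * y < b * y by nra.
  have : za <= zb.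
    have [h|h] := ltP (a * y - 1) 0.
    + by rewrite (Sign_neg ha h); lra.
    + have : 0 < b * y - 1 by lra.
      by move/(Sign_pos hb) => ->; lra.
  have ypp : y * pp < 0 by nra.
  by move=> h; nra.
- have ayb : b * y < a * y by nra.
  have : zb <= za.
    have [h|h] := ltP (b * y - 1) 0.
    + by rewrite (Sign_neg hb h); lra.
    + have : 0 < a * y - 1 by lra.
      by move/(Sign_pos ha) => ->; lra.
  have ypp : 0 < y * pp by nra.
  by move=> h; nra.
- by rewrite y0 !mul0r !mulr0.
Qed.

Lemma sum_pos (T : finType) (P : pred T) (F : T -> R) (i0 : T) :
  P i0 -> (forall j, P j -> 0 < F j) -> 0 < \sum_(j | P j) F j.
Proof.
move=> Pi0 hF; rewrite (bigD1 i0) //=.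
have : 0 <= \sum_(j | P j && (j != i0)) F j.
  by apply: sumr_ge0 => j /andP[Pj _]; apply/ltW/hF.
by have := hF _ Pi0; lra.
Qed.

Lemma comb (T : finType) (P : pred T) (p x : T -> R) (Y : T -> T -> R) :
 (forall i, P i -> 0 < p i) ->
 (forall i j, P i -> P j -> Sign (x i * x j - 1) (Y i j)) ->
 (forall i j, Y i j = Y j i) ->
 (forall i, P i -> \sum_(j | P j) Y i j * (x j * p j) = 0) ->
 (exists i, P i) ->
 ~ (forall i, P i -> x i = 1) -> ~ (forall i, P i -> x i = -1) ->
 forall i j, P i -> P j -> Y i j = -1.
Proof.
move=> hp hS hsym hrow [i0 Pi0] hn1 hnm1.
have mono : forall a b, P a -> P b -> x b < x a ->
    forall j, P j -> Y a j * (x j * p j) = Y b j * (x j * p j).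
  move=> a b Pa Pb ab.
  have H : \sum_(j | P j) (Y a j * (x j * p j) - Y b j * (x j * p j)) = 0.
    by rewrite sumrB hrow // hrow // subrr.
  move=> j Pj; apply/eqP; rewrite -subr_eq0; apply/eqP.
  apply: (psumr_eq0P _ H) => // k Pk; rewrite subr_ge0.
  exact: mono_term ab (hp _ Pk) (hS _ _ Pa Pk) (hS _ _ Pb Pk).
case: (@arg_maxP _ R T i0 P x Pi0) => i1 Pi1 hmax.
case: (@arg_minP _ R T i0 P x Pi0) => i2 Pi2 hmin.
have {}hmax : forall j, P j -> x j <= x i1 by move=> j /hmax.
have {}hmin : forall j, P j -> x i2 <= x j by move=> j /hmin.
set M := x i1 in hmax *; set m := x i2 in hmin *.
have hmM : m <= M by apply: le_trans (hmin _ Pi0) (hmax _ Pi0).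
have [mM|eqmM] : m < M \/ m = M.
  by move: hmM; rewrite le_eqVlt => /orP[/eqP ->|->]; [right|left].
2: {
  have hc : forall j, P j -> x j = M.
    move=> j Pj; apply/eqP; rewrite eq_le hmax //=.
    by rewrite -eqmM; apply: hmin.
  move=> i j Pi Pj.
  have [h|h|h] := ltgtP (M * M - 1) 0.
  + by apply: (Sign_neg (hS _ _ Pi Pj)); rewrite !hc.
  + exfalso.
    have H := hrow _ Pi0.
    have : 0 < \sum_(j | P j) Y i0 j * (x j * p j) \/
           \sum_(j | P j) Y i0 j * (x j * p j) < 0.
      have [M0|M0] : 0 < M \/ M < 0 by nra.
      * left; apply: (@sum_pos _ P _ i0 Pi0) => k Pk.
        rewrite (Sign_pos (hS _ _ Pi0 Pk)) ?hc // mul1r.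
        by have := hp _ Pk; nra.
      * right; rewrite -oppr_gt0 -sumrN; apply: (@sum_pos _ P _ i0 Pi0) => k Pk.
        rewrite (Sign_pos (hS _ _ Pi0 Pk)) ?hc // mul1r.
        by have := hp _ Pk; nra.
    by rewrite H; lra.
  + exfalso.
    have [M1|M1] : M = 1 \/ M = -1.
      have : (M - 1) * (M + 1) = 0 by lra.
      by move/eqP; rewrite mulf_eq0 => /orP[] /eqP h'; [left|right]; lra.
    * by apply: hn1 => k Pk; rewrite hc.
    * by apply: hnm1 => k Pk; rewrite hc.
} 
-
  have hM1 : M <= 1.
    rewrite leNgt; apply/negP => M1.
    have Y11 : Y i1 i1 = 1 by apply: (Sign_pos (hS _ _ Pi1 Pi1)); rewrite -/M; nra.
    have p1 := hp _ Pi1; have p2 := hp _ Pi2.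
    have e1 := mono _ _ Pi1 Pi2 mM _ Pi1; rewrite -/M Y11 in e1.
    have Y21 : Y i2 i1 = 1.
      have : (Y i2 i1 - 1) * (M * p i1) = 0 by lra.
      by move/eqP; rewrite mulf_eq0 => /orP[/eqP|/eqP] h; nra.
    have := hS _ _ Pi2 Pi1; rewrite Y21 => /Sign_one mM1; rewrite -/M -/m in mM1.
    have m0 : 0 < m by nra.
    have e2 := mono _ _ Pi1 Pi2 mM _ Pi2; rewrite -/m hsym Y21 in e2.
    have Y22 : Y i2 i2 = 1.
      have : (Y i2 i2 - 1) * (m * p i2) = 0 by lra.
      by move/eqP; rewrite mulf_eq0 => /orP[/eqP|/eqP] h; nra.
    have := hS _ _ Pi2 Pi2; rewrite Y22 => /Sign_one mm1; rewrite -/m in mm1.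
    have H := hrow _ Pi1.
    have : 0 < \sum_(j | P j) Y i1 j * (x j * p j).
      apply: (@sum_pos _ P _ i0 Pi0) => k Pk.
      have xk := hmin _ Pk.
      rewrite (Sign_pos (hS _ _ Pi1 Pk)) -/M; last by nra.
      by have := hp _ Pk; nra.
    by rewrite H; lra.
  have hm1 : -1 <= m.
    rewrite leNgt; apply/negP => m1.
    have Y22 : Y i2 i2 = 1 by apply: (Sign_pos (hS _ _ Pi2 Pi2)); rewrite -/m; nra.
    have p1 := hp _ Pi1; have p2 := hp _ Pi2.
    have e1 := mono _ _ Pi1 Pi2 mM _ Pi2; rewrite -/m Y22 in e1.
    have Y12 : Y i1 i2 = 1.
      have : (Y i1 i2 - 1) * (m * p i2) = 0 by lra.
      by move/eqP; rewrite mulf_eq0 => /orP[/eqP|/eqP] h; nra.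
    have := hS _ _ Pi1 Pi2; rewrite Y12 => /Sign_one mM1; rewrite -/M -/m in mM1.
    have M0 : M < 0 by nra.
    have e2 := mono _ _ Pi1 Pi2 mM _ Pi1; rewrite -/M hsym Y12 in e2.
    have Y11 : Y i1 i1 = 1.
      have : (Y i1 i1 - 1) * (M * p i1) = 0 by lra.
      by move/eqP; rewrite mulf_eq0 => /orP[/eqP|/eqP] h; nra.
    have := hS _ _ Pi1 Pi1; rewrite Y11 => /Sign_one MM1; rewrite -/M in MM1.
    have H := hrow _ Pi2.
    have : \sum_(j | P j) Y i2 j * (x j * p j) < 0.
      rewrite -oppr_gt0 -sumrN; apply: (@sum_pos _ P _ i0 Pi0) => k Pk.
      have xk := hmax _ Pk.
      rewrite (Sign_pos (hS _ _ Pi2 Pk)) -/m; last by nra.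
      by have := hp _ Pk; nra.
    by rewrite H; lra.
  move=> i j Pi Pj.
  have Sij := hS _ _ Pi Pj.
  have [h|h] := ltP (x i * x j - 1) 0; first exact: (Sign_neg Sij h).
  have xi1 := hmax _ Pi; have xi2 := hmin _ Pi.
  have xj1 := hmax _ Pj; have xj2 := hmin _ Pj.
  have pj := hp _ Pj.
  have [[xi xj]|[xi xj]] : (x i = 1 /\ x j = 1) \/ (x i = -1 /\ x j = -1).
    have [xj0|xj0] := leP 0 (x j).
    + left; split; nra.
    + right; split; nra.
  + have lt1 : m < x i by rewrite xi; lra.
    have e := mono _ _ Pi Pi2 lt1 _ Pj.
    have Y2 : Y i2 j = -1 by apply: (Sign_neg (hS _ _ Pi2 Pj)); rewrite xj -/m; lra.
    rewrite Y2 xj in e.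
    have : (Y i j + 1) * (1 * p j) = 0 by lra.
    by move/eqP; rewrite mulf_eq0 => /orP[/eqP|/eqP] h'; nra.
  + have lt1 : x i < M by rewrite xi; lra.
    have e := mono _ _ Pi1 Pi lt1 _ Pj.
    have Y1 : Y i1 j = -1 by apply: (Sign_neg (hS _ _ Pi1 Pj)); rewrite xj -/M; lra.
    rewrite Y1 xj in e.
    have : (Y i j + 1) * (-1 * p j) = 0 by lra.
    by move/eqP; rewrite mulf_eq0 => /orP[/eqP|/eqP] h'; nra.
Qed.

Lemma Sign_scale (c r z : R) : c != 0 -> Sign (c * r) z -> Sign r (z * c / `|c|).
Proof.
move=> c0 [h1 [h2 h3]].
have [cn|cp] : c < 0 \/ 0 < c.
  by move: c0; rewrite neq_lt => /orP[]; [left|right].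
- have e : c / `|c| = -1 by rewrite ltr0_norm // invrN mulrN divff.
  rewrite -mulrA e; split; [|split].
  + by move=> r0; rewrite h2 ?mulrNN ?mul1r //; nra.
  + by move=> r0; rewrite h1 ?mulN1r //; nra.
  + move=> r0; have : c * r = 0 by rewrite r0 mulr0.
    move/h3 => /andP[z1 z2].
    by apply/andP; split; lra.
- have e : c / `|c| = 1 by rewrite gtr0_norm // divff // gt_eqF.
  rewrite -mulrA e mulr1; split; [|split].
  + by move=> r0; rewrite h1 //; nra.
  + by move=> r0; rewrite h2 //; nra.
  + by move=> r0; apply: h3; rewrite r0 mulr0.
Qed.

Lemma Sign_norm1 (r z : R) : Sign r z -> `|z| <= 1.
Proof. by move/Sign_bd; rewrite ler_norml. Qed.

Lemma entry_eq (z vi vj ai aj : R) : `|vi| <= `|ai| -> `|vj| <= `|aj| ->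
  z * (ai * aj) = - (`|ai| * `|aj|) ->
  `|vi * vj - ai * aj| = z * (vi * vj - ai * aj).
Proof.
move=> hi hj hz.
have [a0|a0] := eqVneq (ai * aj) 0.
- have : vi * vj = 0.
    move/eqP: a0; rewrite mulf_eq0 => /orP[]/eqP a0.
    + by move: hi; rewrite a0 normr0 normr_le0 => /eqP ->; rewrite mul0r.
    + by move: hj; rewrite a0 normr0 normr_le0 => /eqP ->; rewrite mulr0.
  by move=> ->; rewrite a0 subr0 normr0 mulr0.
- have hv : `|vi * vj| <= `|ai * aj|.
    by rewrite !normrM; apply: ler_pM => //; apply: normr_ge0.
  move: hv; rewrite ler_norml => /andP[hv1 hv2].
  have [an|ap] : ai * aj < 0 \/ 0 < ai * aj.
    by move: a0; rewrite neq_lt => /orP[]; [left|right].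
  + move: hz; rewrite -normrM ltr0_norm // => hz.
    have z1 : z = 1.
      have : (z - 1) * (ai * aj) = 0 by rewrite mulrBl hz mul1r; lra.
      by move/eqP; rewrite mulf_eq0 (negPf a0) orbF subr_eq0 => /eqP.
    rewrite z1 mul1r ger0_norm //.
    by move: hv1; rewrite ltr0_norm // opprK => h; lra.
  + move: hz; rewrite -normrM gtr0_norm // => hz.
    have z1 : z = -1.
      have : (z + 1) * (ai * aj) = 0 by rewrite mulrDl hz mul1r; lra.
      by move/eqP; rewrite mulf_eq0 (negPf a0) orbF addr_eq0 => /eqP.
    rewrite z1 mulN1r ler0_norm //.
    by move: hv2; rewrite gtr0_norm // => h; lra.
Qed.

Section Mx.
Context {n : nat}.

Lemma Dent (p q : 'cV[R]_n) i j :
  (p *m p^T - q *m q^T) i j = p i 0 * p j 0 - q i 0 * q j 0.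
Proof. by rewrite !mxE !big_ord1 !mxE. Qed.

Lemma fobjE (us v : 'cV[R]_n) :
  fobj us v = 2^-1 * \sum_i \sum_j `|v i 0 * v j 0 - us i 0 * us j 0|.
Proof.
rewrite /fobj /l1norm; congr (_ * _); apply: eq_bigr => i _.
by apply: eq_bigr => j _; rewrite Dent.
Qed.

Lemma l1E (us : 'cV[R]_n) : l1norm us = \sum_i `|us i 0|.
Proof. by rewrite /l1norm; apply: eq_bigr => i _; rewrite big_ord1. Qed.

Definition Q (Z : 'I_n -> 'I_n -> R) (c : 'I_n -> R) :=
  \sum_i \sum_j Z i j * (c i * c j).

Lemma qshift Z b c : (forall i j, Z i j = Z j i) ->
  (forall i, \sum_j Z i j * b j = 0) ->
  Q Z (fun i => b i + c i) = Q Z c.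
Proof.
move=> hsym hrow; rewrite /Q.
transitivity (\sum_i \sum_j ((b i + c i) * (Z i j * b j) + Z i j * (b i + c i) * c j)).
  by apply: eq_bigr => i _; apply: eq_bigr => j _; ring.
under eq_bigr do rewrite big_split /= -mulr_sumr hrow mulr0 add0r.
rewrite exchange_big /=.
transitivity (\sum_j c j * (\sum_i Z j i * b i + \sum_i Z j i * c i)).
  apply: eq_bigr => j _; rewrite -big_split mulr_sumr; apply: eq_bigr => i _ /=.
  by rewrite (hsym i j); ring.
apply: eq_bigr => j _; rewrite hrow add0r mulr_sumr; apply: eq_bigr => i _; ring.
Qed.

Lemma qscale Z t c : Q Z (fun i => t * c i) = t ^+ 2 * Q Z c.
Proof.
rewrite /Q mulr_sumr; apply: eq_bigr => i _; rewrite mulr_sumr.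
by apply: eq_bigr => j _; ring.
Qed.

Lemma qneg Z c : Q Z (fun i => - c i) = Q Z c.
Proof. by rewrite /Q; apply: eq_bigr => i _; apply: eq_bigr => j _; ring. Qed.

Lemma qzero Z b : (forall i, \sum_j Z i j * b j = 0) -> Q Z b = 0.
Proof.
move=> hrow; rewrite /Q; apply: big1 => i _.
transitivity (b i * \sum_j Z i j * b j); last by rewrite hrow mulr0.
by rewrite mulr_sumr; apply: eq_bigr => j _; ring.
Qed.

Lemma qlb Z c : (forall i j, `|Z i j| <= 1) -> - (\sum_i `|c i|) ^+ 2 <= Q Z c.
Proof.
move=> hZ; rewrite /Q expr2 mulr_suml -sumrN; apply: ler_sum => i _.
rewrite mulr_sumr -sumrN; apply: ler_sum => j _.
have : `|Z i j * (c i * c j)| <= `|c i| * `|c j|.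
  rewrite normrM (normrM (c i)); apply: ler_piMl (hZ i j).
  by apply: mulr_ge0; apply: normr_ge0.
by rewrite ler_norml => /andP[].
Qed.

Lemma qsq (c : 'I_n -> R) : Q (fun _ _ => -1) (fun i => `|c i|) = - (\sum_i `|c i|) ^+ 2.
Proof.
rewrite /Q expr2 mulr_suml -sumrN; apply: eq_bigr => i _.
rewrite mulr_sumr -sumrN; apply: eq_bigr => j _; ring.
Qed.

End Mx.
End Aux.

Theorem theorem2 (R : realType) (n : nat) (us u : 'cV[R]_n) :
  us != 0 -> spurious_stationary us u ->
  forall w : 'cV[R]_n, w = us - u \/ w = - us - u ->
    second_subderiv (fobj us) u 0 w = (- (l1norm us) ^+ 2)%:E /\
    - (l1norm us) ^+ 2 < 0.
Proof.
move=> us0 [[Z [Zsym ZS] Zu] [neq1 neq2]] w hw.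
have hsym : forall i j, Z i j = Z j i.
  by move=> i j; rewrite -{1}Zsym mxE.
have hrow : forall i, \sum_j Z i j * u j 0 = 0.
  by move=> i; have := congr1 (fun M : 'cV[R]_n => M i 0) Zu; rewrite !mxE.
have hS : forall i j, Sign (u i 0 * u j 0 - us i 0 * us j 0) (Z i j).
  by move=> i j; have := ZS i j; rewrite Dent.
have hZ1 : forall i j, `|Z i j| <= 1 by move=> i j; exact: Sign_norm1 (hS i j).
have F1 : forall i, us i 0 = 0 -> u i 0 = 0.
  move=> i ai0.
  have H : \sum_j `|u i 0 * u j 0| = 0.
    transitivity (u i 0 * \sum_j Z i j * u j 0); last by rewrite hrow mulr0.
    rewrite mulr_sumr; apply: eq_bigr => j _.
    by have := Sign_mul (hS i j); rewrite ai0 mul0r subr0 => <-; ring.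
  have Hn : forall j : 'I_n, true -> 0 <= `|u i 0 * u j 0| by move=> *; exact: normr_ge0.
  have := @psumr_eq0P _ _ _ _ Hn H i isT.
  by move/eqP; rewrite normr_eq0 mulf_eq0 orbb => /eqP.
have [i0 Pi0] : exists i, us i 0 != 0.
  case: (pselect (exists i, us i 0 != 0)) => // hn.
  exfalso; move/eqP: us0; apply; apply/matrixP => i j; rewrite (ord1 j) mxE.
  by case: (eqVneq (us i 0) 0) => // h; exfalso; apply: hn; exists i.
have hS' : forall i j, us i 0 != 0 -> us j 0 != 0 ->
   Sign (u i 0 / us i 0 * (u j 0 / us j 0) - 1)
        (Z i j * (us i 0 * us j 0) / (`|us i 0| * `|us j 0|)).
  move=> i j ai aj; have := hS i j.
  have e : u i 0 * u j 0 - us i 0 * us j 0 =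
     (us i 0 * us j 0) * (u i 0 / us i 0 * (u j 0 / us j 0) - 1).
    by field; rewrite ai aj.
  rewrite e => /Sign_scale; rewrite normrM; apply.
  by rewrite mulf_neq0.
have Yall : forall i j, us i 0 != 0 -> us j 0 != 0 ->
   Z i j * (us i 0 * us j 0) / (`|us i 0| * `|us j 0|) = -1.
  apply: (@comb _ 'I_n (fun i => us i 0 != 0) (fun i => `|us i 0|)
      (fun i => u i 0 / us i 0)
      (fun i j => Z i j * (us i 0 * us j 0) / (`|us i 0| * `|us j 0|))).
  - by move=> i /= ai; rewrite normr_gt0.
  - exact: hS'.
  - by move=> i j; rewrite hsym (mulrC (us i 0)) (mulrC `|us i 0|).
  - move=> i /= ai.
    transitivity (\sum_(j | us j 0 != 0) Z i j * u j 0 * (us i 0 / `|us i 0|)).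
      apply: eq_bigr => j aj.
      have ni : `|us i 0| != 0 by rewrite normr_eq0.
      have nj : `|us j 0| != 0 by rewrite normr_eq0.
      by field; rewrite ?ni ?nj ?ai ?aj.
    rewrite -mulr_suml.
    have -> : \sum_(j | us j 0 != 0) Z i j * u j 0 = \sum_j Z i j * u j 0.
      rewrite [RHS](bigID (fun j => us j 0 != 0)) /=.
      rewrite [X in _ = _ + X]big1 ?addr0 // => j /negPn/eqP aj.
      by rewrite F1 // mulr0.
    by rewrite hrow mul0r.
  - by exists i0.
  - move=> h; apply: neq1; apply/matrixP => i j; rewrite (ord1 j).
    have [ai|ai] := eqVneq (us i 0) 0; first by rewrite F1 // ai.
    have e : u i 0 = (u i 0 / us i 0) * us i 0 by field; rewrite ai.
    by rewrite e h // mul1r.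
  - move=> h; apply: neq2; apply/matrixP => i j; rewrite (ord1 j) mxE.
    have [ai|ai] := eqVneq (us i 0) 0; first by rewrite F1 // ai oppr0.
    have e : u i 0 = (u i 0 / us i 0) * us i 0 by field; rewrite ai.
    by rewrite e h // mulN1r.
have F3 : forall i j, Z i j * (us i 0 * us j 0) = - (`|us i 0| * `|us j 0|).
  move=> i j.
  have [ai|ai] := eqVneq (us i 0) 0; first by rewrite ai normr0 !mul0r mulr0 oppr0.
  have [aj|aj] := eqVneq (us j 0) 0; first by rewrite aj normr0 !mulr0 oppr0.
  have hn : `|us i 0| * `|us j 0| != 0 by rewrite mulf_neq0 // normr_eq0.
  by rewrite -[LHS](divfK hn) Yall // mulN1r.
have F2 : forall i, `|u i 0| <= `|us i 0|.
  move=> i; have [ai|ai] := eqVneq (us i 0) 0; first by rewrite F1 // ai.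
  have := hS' i i ai ai; rewrite Yall // => /Sign_m1 h.
  have hx : `|u i 0 / us i 0| <= 1 by rewrite ler_norml; apply/andP; split; nra.
  have e : u i 0 = (u i 0 / us i 0) * us i 0 by field; rewrite ai.
  rewrite e normrM; apply: ler_piMl hx; exact: normr_ge0.

have L0 : 0 <= l1norm us by rewrite l1E; apply: sumr_ge0 => i _; exact: normr_ge0.
have Qa : Q Z (fun i => us i 0) = - (l1norm us) ^+ 2.
  rewrite l1E -(qsq (fun i => us i 0)) /Q; apply: eq_bigr => i _.
  by apply: eq_bigr => j _; rewrite F3; ring.
have Qb : Q Z (fun i => u i 0) = 0 by apply: qzero.
set L := l1norm us in L0 Qa *.
have fu : fobj us u = 2^-1 * L ^+ 2.
  rewrite fobjE; congr (_ * _).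
  transitivity (Q Z (fun i => u i 0) - Q Z (fun i => us i 0)); last by rewrite Qb Qa sub0r opprK.
  rewrite /Q -sumrB; apply: eq_bigr => i _; rewrite -sumrB; apply: eq_bigr => j _.
  by rewrite -(Sign_mul (hS i j)) mulrBr.
have [sg [hsg hw']] : exists sg : R, (sg = 1 \/ sg = -1) /\
    forall i, w i 0 = sg * us i 0 - u i 0.
  case: hw => ->; [exists 1|exists (-1)]; (split; [by auto|]) => i; rewrite !mxE; ring.
have sg2 : sg ^+ 2 = 1 by case: hsg => ->; rewrite ?expr1n ?sqrrN ?expr1n.
have nsg : `|sg| = 1 by case: hsg => ->; rewrite ?normrN normr1.
have zw : forall v : 'cV[R]_n, ((0 : 'cV[R]_n)^T *m v) 0 0 = 0.
  by move=> v; rewrite trmx0 mul0mx mxE.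
have ent : forall t (v : 'cV[R]_n) i, (u + t *: v) i 0 = u i 0 + t * v i 0.
  by move=> t v i; rewrite !mxE.
have key : forall t : R, 0 < t -> t <= 1 ->
   (fobj us (u + t *: w) - fobj us u - t * ((0 : 'cV[R]_n)^T *m w) 0 0) / (t ^+ 2 / 2) = - L ^+ 2.
  move=> t t0 t1.
  have hv : forall i, `|(u + t *: w) i 0| <= `|us i 0|.
    move=> i; rewrite ent hw'.
    rewrite (_ : u i 0 + t * (sg * us i 0 - u i 0) = (1 - t) * u i 0 + t * (sg * us i 0)); last by ring.
    apply: le_trans (ler_normD _ _) _.
    rewrite !normrM nsg mul1r (ger0_norm (ltW t0)) ger0_norm; last by lra.
    by have := F2 i; nra.
  have fv : fobj us (u + t *: w) = 2^-1 * (Q Z (fun i => (u + t *: w) i 0) - Q Z (fun i => us i 0)).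
    rewrite fobjE; congr (_ * _).
    rewrite /Q -sumrB; apply: eq_bigr => i _; rewrite -sumrB; apply: eq_bigr => j _.
    by rewrite -mulrBr; apply: entry_eq (F3 i j).
  have Qv : Q Z (fun i => (u + t *: w) i 0) = t ^+ 2 * Q Z (fun i => us i 0).
    transitivity (Q Z (fun i => u i 0 + t * w i 0)).
      by congr Q; apply/funext => i; rewrite ent.
    rewrite qshift // qscale; congr (_ * _).
    transitivity (Q Z (fun i => u i 0 + w i 0)); first by rewrite qshift.
    transitivity (Q Z (fun i => sg * us i 0)).
      by congr Q; apply/funext => i; rewrite hw'; ring.
    by rewrite qscale sg2 mul1r.
  rewrite fv Qv Qa fu zw.
  have tn : t != 0 by rewrite gt_eqF.
  by field; rewrite tn.

have low : forall (d t : R) (w' : 'cV[R]_n), 0 < d -> 0 < t ->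
   (forall i, `|w' i 0 - w i 0| < d) ->
   - (L + n%:R * d) ^+ 2 <=
   (fobj us (u + t *: w') - fobj us u - t * ((0 : 'cV[R]_n)^T *m w') 0 0) / (t ^+ 2 / 2).
  move=> d t w' d0 t0 hd.
  have t2 : 0 < t ^+ 2 by rewrite exprn_gt0.
  rewrite zw mulr0 subr0 ler_pdivlMr; last by rewrite divr_gt0.
  have fv : 2^-1 * (Q Z (fun i => (u + t *: w') i 0) - Q Z (fun i => us i 0))
      <= fobj us (u + t *: w').
    rewrite fobjE; apply: ler_wpM2l; first by rewrite invr_ge0 ler0n.
    rewrite /Q -sumrB; apply: ler_sum => i _; rewrite -sumrB; apply: ler_sum => j _.
    rewrite -mulrBr; apply: le_trans (ler_norm _) _; rewrite normrM.
    by apply: ler_piMl (hZ1 i j); exact: normr_ge0.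
  have Qv : Q Z (fun i => (u + t *: w') i 0) = t ^+ 2 * Q Z (fun i => u i 0 + w' i 0).
    transitivity (Q Z (fun i => u i 0 + t * w' i 0)).
      by congr Q; apply/funext => i; rewrite ent.
    by rewrite qshift // qscale qshift.
  have Qy := qlb (fun i j => Z i j) (fun i => u i 0 + w' i 0) hZ1.
  have sy : \sum_i `|u i 0 + w' i 0| <= L + n%:R * d.
    have hc : \sum_(i < n) d = n%:R * d by rewrite sumr_const card_ord mulr_natl.
    rewrite /L l1E -hc -big_split; apply: ler_sum => i _ /=.
    have e : u i 0 + w' i 0 = sg * us i 0 + (w' i 0 - w i 0) by rewrite hw'; ring.
    rewrite e; apply: le_trans (ler_normD _ _) _; rewrite normrM nsg mul1r.
    by have := hd i; lra.
  have sy0 : 0 <= \sum_i `|u i 0 + w' i 0| by apply: sumr_ge0 => i _; exact: normr_ge0.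
  rewrite Qv Qa in fv; rewrite fu.
  move: fv Qy sy sy0.
  set S := \sum_i `|u i 0 + w' i 0|; set q := Q Z _; set F := fobj us _.
  move=> fv Qy sy sy0.
  have hS2 : S ^+ 2 <= (L + n%:R * d) ^+ 2.
    rewrite !expr2; apply: ler_pM => //.
  have nd : 0 <= n%:R * d by apply: mulr_ge0; [exact: ler0n | exact: ltW].
  nra.
have Lpos : 0 < L.
  rewrite /L l1E (bigD1 i0) //=.
  have : 0 <= \sum_(i < n | i != i0) `|us i 0| by apply: sumr_ge0 => *; exact: normr_ge0.
  have : 0 < `|us i0 0| by rewrite normr_gt0.
  lra.
split; last by rewrite oppr_lt0 exprn_gt0.
apply/eqP; rewrite eq_le; apply/andP; split.
- apply: ge_ereal_sup => _ [d /= d0 <-].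
  pose t := d / (2 * (d + 1)).
  have et : t * (2 * (d + 1)) = d by rewrite /t divfK // mulf_neq0 // gt_eqF //; lra.
  have t0 : 0 < t by rewrite /t divr_gt0 //; lra.
  have td : t < d by nra.
  have t1 : t <= 1 by nra.
  apply: ereal_inf_lbound; exists (t, w) => /=.
    split; first by apply/andP.
    by move=> i; rewrite subrr normr0.
  by rewrite key.
- have H : forall d, 0 < d ->
      ((- (L + n%:R * d) ^+ 2)%:E <= second_subderiv (fobj us) u (0 : 'cV[R]_n) w)%E.
    move=> d d0; rewrite /second_subderiv.
    apply: le_trans; last first.
      apply: ereal_sup_ubound; exists d => //.
    apply/ereal_infP => _ [[t w'] /= [/andP[t0 td] hd] <-].
    by rewrite lee_fin; apply: low.
  apply/lee_addgt0Pr => e e0.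
  pose K := n%:R * (2 * L + n%:R).
  have K0 : 0 <= K by have := ler0n R n; rewrite /K; nra.
  pose dl := e / (e + K + 1).
  have edl : dl * (e + K + 1) = e by rewrite /dl divfK // gt_eqF //; lra.
  have dl0 : 0 < dl by rewrite /dl divr_gt0 //; lra.
  apply: (@le_trans _ _ ((- (L + n%:R * dl) ^+ 2)%:E + e%:E)); last first.
    by apply: leeD (H _ dl0) (lexx _).
  rewrite -EFinD lee_fin.
  have dl1 : dl <= 1 by nra.
  have dK : dl * K <= e by nra.
  have n0 : 0 <= n%:R :> R by exact: ler0n.
  have h2 : (n%:R * dl) ^+ 2 <= n%:R * n%:R * dl.
    rewrite expr2; have : 0 <= n%:R * n%:R * dl by apply: mulr_ge0; [nra|lra].
    nra.
  rewrite /K in dK.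
  nra.
Qed.
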